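(* Let $E$ be a finite-dimensional vector space of dimension $d\ge 2$ over a local field and let $\nu$ be a probability distribution on $\mathrm{End}(E)$. The set $\underline{\ker}(\nu)$ is a countable union of subspaces of $E$ each of dimension at most $\dim(E)-\underline{\mathrm{rank}}(\nu)$.
   Context: $\nu^{*n}$ is the law of a product of $n$ i.i.d. $\nu$-distributed endomorphisms. $\underline{\mathrm{rank}}(\nu)$ is the largest integer $r$ with $\nu^{*n}\{\gamma:\mathrm{rank}(\gamma)<r\}=0$ for all $n\ge0$. $\underline{\ker}(\nu)=\{v\in E:\exists n\ge0,\ \nu^{*n}\{h:hv=0\}>0\}$. *)

(* Defs.v *)
From HB Require Import structures.
From mathcomp Require Import all_boot all_order all_algebra.
From mathcomp Require Import all_classical all_reals all_analysis.

Set Implicit Arguments.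
Unset Strict Implicit.
Unset Printing Implicit Defensive.

Import Order.TTheory GRing.Theory Num.Theory.
Local Open Scope classical_set_scope.
Local Open Scope ring_scope.
HB.mixin Record Field_isLocal K of GRing.Field K & Topological K := {
  lf_add_cont : continuous (fun p : K * K => p.1 + p.2);
  lf_mul_cont : continuous (fun p : K * K => p.1 * p.2);
  lf_opp_cont : continuous (fun x : K => - x);
  lf_inv_cont : forall x : K, x != 0 -> {for x, continuous (@GRing.inv K)};
  lf_hausdorff : hausdorff_space K;
  lf_locally_compact : locally_compact [set: K];
  lf_nondiscrete : ~ open [set (0 : K)]
}.

#[short(type="localFieldType")]
HB.structure Definition LocalField :=
  {K of Field_isLocal K & GRing.Field K & Topological K}.

Local Open Scope classical_set_scope.
Local Open Scope ring_scope.

(* point the field at 0 (only needed by the library to build the Borel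
   measurable structure on matrices; the choice of point is irrelevant) *)
HB.instance Definition _ (K : localFieldType) := isPointed.Build K 0.

(* End(E), E = K^d (row vectors, endomorphisms acting on the right
   v |-> v *m h), with its Borel sigma-algebra. *)
Definition EndE (K : localFieldType) (d : nat) :=
  g_sigma_algebraType (@open 'M[K]_d).

Section Conv.
Context (K : localFieldType) (d : nat) (R : realType).
Local Open Scope ereal_scope.

Fixpoint conv_pow (nu : set (EndE K d) -> \bar R) (n : nat)
    : set (EndE K d) -> \bar R :=
  match n with
  | 0%N => fun A => \d_(1%:M : EndE K d) A
  | m.+1 => pushforward (conv_pow nu m \x nu)
              (fun p : EndE K d * EndE K d => (p.1 *m p.2 : EndE K d))
  end.

(* lower rank: the largest r with nu^{*n}{rank < r} = 0 for all n
   (such r is automatically <= d, since rank <= d always). *)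
Definition lower_rank (nu : set (EndE K d) -> \bar R) : nat :=
  \max_(r < d.+2 | `[< forall n, conv_pow nu n
                         [set g : EndE K d | (\rank g < r)%N] = 0 >]) r.

Definition lower_ker (nu : set (EndE K d) -> \bar R) : set 'rV[K]_d :=
  [set v | exists n, 0 < conv_pow nu n [set h : EndE K d | v *m h == (0 : 'rV[K]_d)%R]].

End Conv.

(* Main.v *)
Require Import Defs.
From HB Require Import structures.
From mathcomp Require Import all_boot all_order all_algebra.
From mathcomp Require Import all_classical all_reals all_analysis.
From mathcomp Require ring finmap zify perm.

Local Open Scope classical_set_scope.
Local Open Scope ring_scope.

Module PA.
Import mathcomp.algebra_tactics.ring mathcomp.finmap.finmap.
Set Implicit Arguments.
Unset Strict Implicit.
Import Order.TTheory GRing.Theory Num.Theory.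
Local Open Scope classical_set_scope.
Local Open Scope ring_scope.

Section LF.
Variable K : localFieldType.

Lemma lf_addC {T} (F : set_system T) {FF : Filter F} (f g : T -> K) a b :
  f @ F --> a -> g @ F --> b -> (fun x => f x + g x) @ F --> a + b.
Proof.
move=> fa gb; apply: (@continuous2_cvg _ _ _ _ F _ f g (fun x y : K => x + y) a b) => //.
exact: (@lf_add_cont K (a, b)).
Qed.

Lemma lf_mulC {T} (F : set_system T) {FF : Filter F} (f g : T -> K) a b :
  f @ F --> a -> g @ F --> b -> (fun x => f x * g x) @ F --> a * b.
Proof.
move=> fa gb; apply: (@continuous2_cvg _ _ _ _ F _ f g (fun x y : K => x * y) a b) => //.
exact: (@lf_mul_cont K (a, b)).
Qed.

Lemma lf_oppC {T} (F : set_system T) {FF : Filter F} (f : T -> K) a :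
  f @ F --> a -> (fun x => - f x) @ F --> - a.
Proof. by move=> fa; apply: (@continuous_cvg _ _ _ F _ f (fun x : K => - x)) => //; exact: lf_opp_cont. Qed.

Lemma lf_invC {T} (F : set_system T) {FF : Filter F} (f : T -> K) a :
  a != 0 -> f @ F --> a -> (fun x => (f x)^-1) @ F --> a^-1.
Proof. by move=> a0 fa; apply: (@continuous_cvg _ _ _ F _ f (fun x : K => x^-1)) => //; exact: lf_inv_cont. Qed.



Lemma lf_compact_nbhs0 : exists C : set K,
  [/\ compact C, closed C, nbhs 0 C & ~ C 1].
Proof.
have [C0 nC0 [cC0 clC0]] := @lf_locally_compact K 0 I.
have nC0' : nbhs (0:K) C0.
  by move: nC0; rewrite /within /=; apply: filterS => x; apply.
have : ~ cluster (nbhs (0:K)) 1.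
  by move=> /lf_hausdorff /eqP; rewrite eq_sym oner_eq0.
move=> /existsNP [A /existsNP [B /not_implyP [nA /not_implyP [nB AB]]]].
exists (C0 `&` ~` B°); split.
- apply: subclosed_compact cC0 _ => //.
  apply: closedI => //; apply: open_closedC; exact: open_interior.
- apply: closedI => //; apply: open_closedC; exact: open_interior.
- apply: filterS (filterI nC0' nA) => x [C0x Ax]; split => // Bx.
  by apply: AB; exists x; split => //; exact: interior_subset.
- by move=> [_]; apply; exact: nbhs_singleton (nbhs_interior nB).
Qed.



Lemma lf_tube (C U : set K) (a : K) : compact C ->
  (forall c, C c -> nbhs (a * c) U) ->
  \forall x \near a, forall c, C c -> U (x * c).
Proof.
move=> /compact_near_coveringP cC hU.
have := cC K (nbhs a) (fun x c => U (x * c)) _.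
apply => c Cc.
have := @lf_mul_cont K (a, c) _ (hU c Cc).
case=> [[P Q] /= [nP nQ] PQ].
exists (Q, P) => //= [[c' x]] /= [Qc' Px].
exact: (PQ (x, c')).
Qed.


Lemma lf_nbhs0_nz (W : set K) : nbhs 0 W -> exists x, W x /\ x != 0.
Proof.
move=> nW; apply: contrapT => hW; apply: (@lf_nondiscrete K).
rewrite openE => y /= ->; rewrite /interior.
apply: filterS nW => z Wz; apply: contrapT => z0; apply: hW; exists z; split => //.
exact/eqP.
Qed.
Lemma lf_ratio (y : K) (B : set K) : y != 0 -> nbhs 1 B ->
  exists2 Y, nbhs y Y & forall a b, Y a -> Y b -> B (a * b^-1).
Proof.
move=> y0 nB.
have := @lf_mul_cont K (y, y^-1) _ (_ : nbhs (y * y^-1) B).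
rewrite mulfV //; move=> /(_ nB).
case=> [[P Q] /= [nP nQ] PQ].
have nQ' : nbhs y [set b | Q b^-1] := @lf_inv_cont K y y0 _ nQ.
exists (P `&` [set b | Q b^-1]); first exact: filterI.
by move=> a b [Pa _] [_ Qb]; apply: (PQ (a, b^-1)).
Qed.


Lemma lf_nilp : exists2 p : K, p != 0 & (fun n => p ^+ n) @ \oo --> 0.
Proof.
have [C [cC clC nC C1]] := lf_compact_nbhs0.
have nW : \forall x \near (0:K), C x /\ forall c, C c -> C (x * c).
  near=> x; split; first by near: x.
  near: x; apply: lf_tube => // c _; rewrite mul0r; exact: nC.
have [x [[Cx xC] x0]] := lf_nbhs0_nz nW.
have Cp : forall n, C (x ^+ n.+1).
  by elim=> [|n IH]; rewrite ?expr1 // exprS; apply: xC.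
pose G := (fun n => x ^+ n) @ \oo.
have GC : G C by exists 1%N => // n /= n1; rewrite -(prednK n1); apply: Cp.
have cl0 : forall y, cluster G y -> y = 0.
  move=> y cGy; apply: contrapT => /eqP y0; apply: C1; apply: clC => B nB.
  have [Y nY YB] := lf_ratio y0 nB.
  have ex : forall N, exists n, (N <= n)%N /\ Y (x ^+ n).
    move=> N.
    have GA : G [set z | exists n, (N <= n)%N /\ z = x ^+ n].
      by exists N => // n /= Nn; exists n.
    have [z [[n [Nn ->]] Yz]] := cGy _ _ GA nY.
    by exists n.
  have [n1 [n11 Y1]] := ex 1%N.
  have [n2 [n12 Y2]] := ex n1.+1.
  exists (x ^+ n2 / x ^+ n1); split; last exact: YB.
  rewrite -expfB //; have -> : (n2 - n1 = (n2 - n1).-1.+1)%N.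
    by rewrite prednK // subn_gt0.
  exact: Cp.
exists x => //.
have PG : ProperFilter G by rewrite /G; exact: fmap_proper_filter.
have [y [Cy cGy]] := cC G PG GC.
have := @compact_cluster_set1 K 0 G C (@lf_hausdorff K) cC nC PG GC.
apply; apply/seteqP; split => z /=; first exact: cl0.
by move=> ->; rewrite -(cl0 _ cGy).
Unshelve. all: by end_near. Qed.

Lemma lf_cont_affine (c x : K) : continuous (fun z : K => c * (z - x)).
Proof.
move=> z; apply: lf_mulC; first exact: cvg_cst.
apply: lf_addC; first exact: cvg_id.
exact: cvg_cst.
Qed.

Lemma lf_cont_scale (c : K) : continuous (fun z : K => c * z).
Proof. move=> z; apply: lf_mulC; [exact: cvg_cst|exact: cvg_id]. Qed.

Lemma lf_sub_nbhs (O : set K) (y : K) : nbhs y O ->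
  exists2 N, nbhs 0 N & forall a b, N a -> N b -> O (y + a - b).
Proof.
move=> nO.
have := @lf_add_cont K (y, 0) O; rewrite addr0 => /(_ nO).
case=> [[P Q] /= [nP nQ] PQ].
have := @lf_add_cont K (y, 0) P; rewrite addr0 => /(_ nP).
case=> [[P' Q'] /= [nP' nQ'] PQ'].
have nQ2 : nbhs (0:K) [set b | Q (- b)].
  by have := @lf_opp_cont K 0 Q; rewrite oppr0; apply.
exists (Q' `&` [set b | Q (- b)]); first exact: filterI.
move=> a b [Q'a _] [_ Qb].
apply: (PQ (y + a, - b)); split => //=.
apply: (PQ' (y, a)); split => //=; exact: nbhs_singleton.
Qed.

Lemma lf_base : exists B : nat -> set K,
  (forall k, open (B k)) /\
  (forall (O : set K) y, open O -> O y -> exists k, B k y /\ B k `<=` O).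
Proof.
have [p p0 pcv] := lf_nilp.
have [C [cC clC nC _]] := lf_compact_nbhs0.
pose U := C°.
have oU : open U := @open_interior _ C.
have U0 : U 0 := nbhs_singleton (nbhs_interior nC).
have UC : U `<=` C := @interior_subset _ C.
have pn0 : forall n, p ^+ n != 0 by move=> n; rewrite expf_neq0.
pose Bs (x : K) (n : nat) := [set z | U ((p ^+ n)^-1 * (z - x))].
have oBs : forall x n, open (Bs x n).
  move=> x n; exact: (proj1 (continuousP _) (@lf_cont_affine _ _) _ oU).
pose D (m : nat) := [set y : K | C (p ^+ m * y)].
have cD : forall m, compact (D m).
  move=> m; have -> : D m = [set (p ^+ m)^-1 * c | c in C].
    apply/seteqP; split => y /=.
      by move=> Cy; exists (p ^+ m * y) => //; rewrite mulKf.
    by move=> [c Cc <-]; rewrite /D /= mulVKf.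
  apply: continuous_compact => //.
  apply: continuous_subspaceT; exact: lf_cont_scale.
have hX : forall m n, {X : {fset K} | D m `<=` cover [set` X] (fun x => Bs x n)}.
  move=> m n; apply: cid.
  have := cD m; rewrite compact_cover => cvD.
  have cov0 : D m `<=` cover (D m) (fun x => Bs x n).
    by move=> y Dy; exists y => //; rewrite /Bs /= subrr mulr0.
  have [X _ cov] := cvD K (D m) (fun x => Bs x n) (fun x _ => oBs x n) cov0.
  by exists X.
pose X m n := proj1_sig (hX m n).
pose B (k : nat) := if (choice.unpickle k : option (nat * nat * nat)) is Some (m, n, i)
  then Bs (nth 0 (enum_fset (X m n)) i) n else set0.
exists B; split.
  by move=> k; rewrite /B; case: (choice.unpickle k : option (nat * nat * nat)) => [[[m n] i]|]; [exact: oBs|exact: open0].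
move=> O y oO Oy.
have [N nN NO] := @lf_sub_nbhs O y (open_nbhs_nbhs (conj oO Oy)).
have Hn : \forall x \near (0:K), forall c, C c -> N (x * c).
  by apply: lf_tube => // c _; rewrite mul0r.
have Hn' : \forall n \near \oo, forall c, C c -> N (p ^+ n * c) := pcv _ Hn.
have [n /= Nn] := filter_ex Hn'.
have Hm : (fun m => p ^+ m * y) @ \oo --> 0.
  by rewrite -(mul0r y); apply: lf_mulC => //; exact: cvg_cst.
have Hm' : \forall m \near \oo, C (p ^+ m * y) := Hm _ nC.
have [m /= Dm] := filter_ex Hm'.
have [x Xx Bxy] := proj2_sig (hX m n) y Dm.
exists (choice.pickle (m, n, index x (enum_fset (X m n)))).
rewrite /B choice.pickleK nth_index //; split => // z Bxz.
have -> : z = y + p ^+ n * ((p ^+ n)^-1 * (z - x)) - p ^+ n * ((p ^+ n)^-1 * (y - x)).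
  by rewrite !mulVKf //; ring.
by apply: NO; apply: Nn; apply: UC.
Qed.
End LF.

Unset Implicit Arguments.
Set Strict Implicit.

End PA.
Import PA.

Module PB.
Import mathcomp.algebra_tactics.ring mathcomp.finmap.finmap.
Import Order.TTheory GRing.Theory Num.Theory.
Local Open Scope classical_set_scope.
Local Open Scope ring_scope.

Section MX.
Variable K : localFieldType.

Lemma mx_cvgP {T} (F : set_system T) {FF : Filter F} m n
  (f : T -> 'M[K]_(m,n)) (h : 'M[K]_(m,n)) :
  (forall i j, (fun x => f x i j) @ F --> h i j) -> f @ F --> h.
Proof.
move=> hf A [P /= nP PA].
have : \forall x \near F, forall ij : 'I_m * 'I_n, P ij.1 ij.2 (f x ij.1 ij.2).
  apply: filter_forall => -[i j]; exact: (hf i j _ (nP i j)).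
by apply: filterS => x Hx; apply: PA => i j; exact: (Hx (i, j)).
Qed.

Lemma mx_entry_cvg m n (h : 'M[K]_(m,n)) i j :
  (fun N : 'M[K]_(m,n) => N i j) @ nbhs h --> h i j.
Proof.
move=> Q nQ.
exists (fun (i' : 'I_m) (j' : 'I_n) => (if (i' == i) && (j' == j) then Q else setT) : set K).
  by move=> i' j'; case: ifP => [/andP[/eqP-> /eqP->] //|_]; exact: filterT.
by move=> N /(_ i j); rewrite !eqxx.
Qed.

Lemma fst_cvg (A B : topologicalType) (q : A * B) :
  (fun x : A * B => x.1) @ nbhs q --> q.1.
Proof.
move=> P nP; exists (P, setT) => /=; first by split => //; exact: filterT.
by move=> [x y] [Px _].
Qed.

Lemma snd_cvg (A B : topologicalType) (q : A * B) :
  (fun x : A * B => x.2) @ nbhs q --> q.2.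
Proof.
move=> P nP; exists (setT, P) => /=; first by split => //; exact: filterT.
by move=> [x y] [_ Py].
Qed.

Lemma lf_sumC {T} (F : set_system T) {FF : Filter F} (I : Type) (s : seq I)
  (f : I -> T -> K) (a : I -> K) :
  (forall i, f i @ F --> a i) ->
  (fun x => \sum_(i <- s) f i x) @ F --> \sum_(i <- s) a i.
Proof.
move=> hf; elim: s => [|i s IH].
  rewrite big_nil; under eq_fun do rewrite big_nil; exact: cvg_cst.
rewrite big_cons; under eq_fun do rewrite big_cons.
exact: lf_addC.
Qed.

Lemma lf_prodC {T} (F : set_system T) {FF : Filter F} (I : Type) (s : seq I)
  (f : I -> T -> K) (a : I -> K) :
  (forall i, f i @ F --> a i) ->
  (fun x => \prod_(i <- s) f i x) @ F --> \prod_(i <- s) a i.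
Proof.
move=> hf; elim: s => [|i s IH].
  rewrite big_nil; under eq_fun do rewrite big_nil; exact: cvg_cst.
rewrite big_cons; under eq_fun do rewrite big_cons.
exact: lf_mulC.
Qed.

Lemma mulmx_cont m n p :
  continuous (fun q : 'M[K]_(m,n) * 'M[K]_(n,p) => q.1 *m q.2).
Proof.
move=> q; apply: mx_cvgP => i j.
have h1 : forall k, (fun x : 'M[K]_(m,n) * 'M[K]_(n,p) => x.1 i k) @ nbhs q --> q.1 i k.
  move=> k; exact: (cvg_comp (fun x : 'M[K]_(m,n) * 'M[K]_(n,p) => x.1) (fun N : 'M[K]_(m,n) => N i k) (@fst_cvg _ _ q) (@mx_entry_cvg m n q.1 i k)).
have h2 : forall k, (fun x : 'M[K]_(m,n) * 'M[K]_(n,p) => x.2 k j) @ nbhs q --> q.2 k j.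
  move=> k; exact: (cvg_comp (fun x : 'M[K]_(m,n) * 'M[K]_(n,p) => x.2) (fun N : 'M[K]_(n,p) => N k j) (@snd_cvg _ _ q) (@mx_entry_cvg n p q.2 k j)).
under eq_fun do rewrite mxE; rewrite mxE.
apply: lf_sumC => k; apply: lf_mulC; [exact: h1|exact: h2].
Qed.

End MX.

Section MB.
Variable K : localFieldType.

Lemma mx_base m n : exists B : nat -> set 'M[K]_(m,n),
  (forall k, open (B k)) /\
  (forall (O : set 'M[K]_(m,n)) h, open O -> O h -> exists k, B k h /\ B k `<=` O).
Proof.
have [bK [obK hbK]] := lf_base K.
pose rect (f : {ffun 'I_m * 'I_n -> nat}) :=
  [set N : 'M[K]_(m,n) | forall i j, bK (f (i,j)) (N i j)].
pose B k := if (choice.unpickle k : option {ffun 'I_m * 'I_n -> nat}) is Some f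
  then rect f else set0.
exists B; split.
  move=> k; rewrite /B; case: (choice.unpickle k : option {ffun 'I_m * 'I_n -> nat}) => [f|]; last exact: open0.
  rewrite openE => N RN; exists (fun i j => bK (f (i,j))) => [i j|N' HN']; last exact: HN'.
  by apply: open_nbhs_nbhs; split => //; exact: RN.
move=> O h oO Oh.
have := @open_nbhs_nbhs _ h O (conj oO Oh); case=> P /= nP PO.
have hg : forall ij : 'I_m * 'I_n, {k | bK k (h ij.1 ij.2) /\ bK k `<=` P ij.1 ij.2}.
  move=> [i j]; apply: cid => /=.
  have := nP i j.
  rewrite nbhsE.
  move=> [W [oW Wh] WP].
  have [k [bk bkO]] := hbK W (h i j) oW Wh.
  by exists k; split => // z /bkO /WP.
pose f := [ffun ij => proj1_sig (hg ij)].
exists (choice.pickle f); rewrite /B choice.pickleK; split.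
  by move=> i j; rewrite ffunE; exact: (proj1 (proj2_sig (hg (i, j)))).
move=> N RN; apply: PO => i j; apply: (proj2 (proj2_sig (hg (i, j)))).
by have := RN i j; rewrite ffunE.
Qed.

End MB.

Section MM.
Variable K : localFieldType.
Variable d : nat.

Lemma EndE_open_meas (V : set 'M[K]_d) : open V -> measurable (V : set (EndE K d)).
Proof. by move=> oV; apply: sub_sigma_algebra. Qed.

Lemma mulmx_meas :
  measurable_fun [set: EndE K d * EndE K d]
    (fun p : EndE K d * EndE K d => (p.1 *m p.2 : EndE K d)).
Proof.
have [B [oB hB]] := mx_base K d d.
apply: (measurability (@open 'M[K]_d : set (set (EndE K d)))) => //.
move=> _ [V oV <-].
pose F := fun V : set 'M[K]_d => fun k : nat =>
  if (choice.unpickle k : option (nat * nat)) is Some (k1, k2) then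
    (if `[< B k1 `*` B k2 `<=` (fun p : 'M[K]_d * 'M[K]_d => p.1 *m p.2) @^-1` V >]
     then B k1 `*` B k2 else set0)
  else set0.
have -> : [set: EndE K d * EndE K d] `&`
    (fun p : EndE K d * EndE K d => (p.1 *m p.2 : EndE K d)) @^-1` V =
    \bigcup_k (F V k : set (EndE K d * EndE K d)).
  rewrite setTI; apply/seteqP; split => [[a b] /= Vab|[a b] [k _]].
    have op : open ((fun p : 'M[K]_d * 'M[K]_d => p.1 *m p.2) @^-1` V).
      exact: (proj1 (continuousP _) (@mulmx_cont K d d d) _ oV).
    have := @open_nbhs_nbhs _ (a, b) _ (conj op Vab).
    case=> [[P Q] /= [nP nQ] PQ].
    move: nP; rewrite nbhsE => -[P' [oP' P'a] P'P].
    move: nQ; rewrite nbhsE => -[Q' [oQ' Q'b] Q'Q].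
    have [k1 [B1a B1P]] := hB P' a oP' P'a.
    have [k2 [B2b B2Q]] := hB Q' b oQ' Q'b.
    exists (choice.pickle (k1, k2)) => //.
    rewrite /F choice.pickleK.
    have sub : B k1 `*` B k2 `<=` (fun p : 'M[K]_d * 'M[K]_d => p.1 *m p.2) @^-1` V.
      by move=> [x y] [/= /B1P /P'P Px /B2Q /Q'Q Qy]; apply: (PQ (x, y)).
    by rewrite asboolT.
  rewrite /F; case: (choice.unpickle k : option (nat * nat)) => [[k1 k2]|] //.
  by case: asboolP => // sub /sub.
apply: bigcupT_measurable => k; rewrite /F.
case: (choice.unpickle k : option (nat * nat)) => [[k1 k2]|]; last exact: measurable0.
case: asboolP => _; last exact: measurable0.
by apply: measurableX; apply: EndE_open_meas.
Qed.

End MM.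

End PB.
Import PB.

Module PC.
Import Order.TTheory GRing.Theory Num.Theory.
Local Open Scope classical_set_scope.
Local Open Scope ring_scope.

Section CM.
Context (K : localFieldType) (d : nat) (R : realType).
Variables (mu : {measure set EndE K d -> \bar R}) (nu : probability (EndE K d) R).
Local Open Scope ereal_scope.

Definition convM := pushforward (mu \x nu)
  (fun p : EndE K d * EndE K d => (p.1 *m p.2 : EndE K d)).

Let mf := @mulmx_meas K d.

Let convM0 : convM set0 = 0.
Proof. by rewrite /convM /pushforward preimage_set0 measure0. Qed.

Let convM_ge0 A : 0 <= convM A.
Proof. exact: measure_ge0. Qed.

Let convM_sigma_additive : semi_sigma_additive convM.
Proof.
move=> F mF tF mUF; rewrite /convM /pushforward preimage_bigcup.
apply: measure_semi_sigma_additive.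
- by move=> n; rewrite -[X in measurable X]setTI; exact: mf.
- apply/trivIsetP => /= i j _ _ ij; rewrite -preimage_setI.
  by move/trivIsetP : tF => /(_ _ _ _ _ ij) ->//; rewrite preimage_set0.
- by rewrite -preimage_bigcup -[X in measurable X]setTI; exact: mf.
Qed.

HB.instance Definition _ := isMeasure.Build _ _ _ convM
  convM0 convM_ge0 convM_sigma_additive.

Lemma convMT : mu setT = 1 -> convM setT = 1.
Proof.
move=> muT; rewrite /convM /pushforward preimage_setT -setXTT product_measure1E //.
by rewrite muT mul1e; exact: probability_setT.
Qed.

End CM.

Section CP.
Context (K : localFieldType) (d : nat) (R : realType).
Local Open Scope ereal_scope.

Lemma conv_pow_meas (nu : probability (EndE K d) R) n :
  exists mu : {measure set EndE K d -> \bar R},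
    conv_pow nu n = mu /\ mu setT = 1.
Proof.
elim: n => [|n [mu [Hmu muT]]].
  exists (\d_(1%:M : EndE K d)); split => //; exact: diracT.
exists (@convM K d R mu nu); split; last exact: convMT.
by rewrite /= Hmu.
Qed.
End CP.

End PC.
Import PC.

Module PE.
Import mathcomp.zify.zify mathcomp.fingroup.perm.
Import Order.TTheory GRing.Theory Num.Theory.
Local Open Scope classical_set_scope.
Local Open Scope ring_scope.

Section E.
Variable K : localFieldType.

Lemma closed0K : closed [set (0:K)].
Proof. exact: (accessible_closed_set1 (hausdorff_accessible (@lf_hausdorff K))). Qed.

Lemma closed_zero_fam (T : topologicalType) (I : Type) (f : I -> T -> K) :
  (forall i, continuous (f i)) -> closed [set x | forall i, f i x = 0].
Proof.
move=> cf.
have -> : [set x | forall i, f i x = 0] = \bigcap_(i in setT) (f i @^-1` [set 0]).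
  by apply/seteqP; split => x /= H i; [move=> _|]; apply: H.
apply: closed_bigI => i _; apply: closed_comp => [x _|]; [exact: cf|exact: closed0K].
Qed.

Lemma mulmx_l_cont m n p (A : 'M[K]_(m,n)) :
  continuous (fun h : 'M[K]_(n,p) => A *m h).
Proof.
move=> h.
apply: (@continuous2_cvg _ _ _ _ (nbhs h) _ (fun _ => A) (fun x => x)
  (fun a b => a *m b) A h).
- exact: (@mulmx_cont K m n p (A, h)).
- exact: cvg_cst.
- exact: cvg_id.
Qed.

Lemma mulmx_r_cont m n p (B : 'M[K]_(n,p)) :
  continuous (fun h : 'M[K]_(m,n) => h *m B).
Proof.
move=> h.
apply: (@continuous2_cvg _ _ _ _ (nbhs h) _ (fun x => x) (fun _ => B)
  (fun a b => a *m b) h B).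
- exact: (@mulmx_cont K m n p (h, B)).
- exact: cvg_id.
- exact: cvg_cst.
Qed.

Lemma det_cont n : continuous (fun M : 'M[K]_n => \det M).
Proof.
move=> M.
have -> : (fun M : 'M[K]_n => \det M) =
  fun M => \sum_(s : 'S_n) (-1) ^+ s * \prod_i M i (s i) by [].
apply: (@lf_sumC K _ (nbhs M) _) => s; apply: (@lf_mulC K _ (nbhs M) _); first exact: cvg_cst.
apply: (@lf_prodC K _ (nbhs M) _) => i; exact: mx_entry_cvg.
Qed.

Lemma detAB_cont r d (A : 'M[K]_(r,d)) (B : 'M[K]_(d,r)) :
  continuous (fun h : 'M[K]_d => \det (A *m h *m B)).
Proof.
move=> h.
apply: (@continuous_comp _ _ _ (fun h => A *m h *m B) (fun M => \det M) h);
  last exact: det_cont.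
apply: (@continuous_comp _ _ _ (fun h => A *m h) (fun M => M *m B) h).
  exact: mulmx_l_cont.
exact: mulmx_r_cont.
Qed.

Lemma rank_lt_closed d r : closed [set h : 'M[K]_d | (\rank h < r)%N].
Proof.
have -> : [set h : 'M[K]_d | (\rank h < r)%N] = [set h | forall AB : 'M[K]_(r,d) * 'M[K]_(d,r),
    \det (AB.1 *m h *m AB.2) = 0].
  apply/seteqP; split => h /=.
  - move=> hr [A B] /=; apply/eqP; apply: contraLR hr => dn0.
    rewrite -leqNgt.
    have u : A *m h *m B \in unitmx by rewrite unitmxE unitfE.
    rewrite -(mxrank_unit u).
    exact: leq_trans (mxrankM_maxl _ _) (mxrankM_maxr _ _).
  - move=> H; rewrite ltnNge; apply/negP => rh.
    have := H (pid_mx r *m invmx (col_ebase h), invmx (row_ebase h) *m pid_mx r).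
    rewrite /= -{2}(mulmx_ebase h) !mulmxA mulmxKV ?col_ebase_unit //.
    rewrite mulmxK ?row_ebase_unit // !mul_pid_mx.
    have hd : (\rank h <= d)%N := rank_leq_row h.
    have -> : minn d (minn (minn d (minn r (\rank h))) r) = r by lia.
    by rewrite pid_mx_1 det1 => /eqP; rewrite oner_eq0.
apply: closed_zero_fam => -[A B]; exact: detAB_cont.
Qed.

Lemma ker_closed p d (B : 'M[K]_(p,d)) : closed [set h : 'M[K]_d | B *m h == 0].
Proof.
have -> : [set h : 'M[K]_d | B *m h == 0] =
    [set h | forall ij : 'I_p * 'I_d, (B *m h) ij.1 ij.2 = 0].
  apply/seteqP; split => h /=.
    by move=> /eqP -> [i j]; rewrite mxE.
  by move=> H; apply/eqP/matrixP => i j; rewrite [RHS]mxE; exact: (H (i, j)).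
apply: closed_zero_fam => -[i j] h.
apply: (@continuous_comp _ _ _ (fun h => B *m h) (fun M : 'M[K]_(p,d) => M i j) h).
  exact: mulmx_l_cont.
exact: mx_entry_cvg.
Qed.

Lemma EndE_closed_meas d (C : set 'M[K]_d) : closed C -> measurable (C : set (EndE K d)).
Proof.
move=> cC; rewrite -(setCK C); apply: measurableC; apply: EndE_open_meas.
exact: closed_openC.
Qed.

End E.

End PE.
Import PE.

Module PD.
Import mathcomp.zify.zify.
Import Order.TTheory GRing.Theory Num.Theory.
Local Open Scope classical_set_scope.
Local Open Scope ring_scope.

Section Main.
Context (K : localFieldType) (R : realType) (d : nat) (nu : probability (EndE K d) R).
Local Notation mu n := (conv_pow nu n).
Local Open Scope ereal_scope.

Definition Az p (S : 'M[K]_(p,d)) : set (EndE K d) := [set h : EndE K d | S *m h == 0%R].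
Arguments Az {p}.

Lemma Az_meas p (S : 'M[K]_(p,d)) : measurable (Az S).
Proof. exact: (@EndE_closed_meas K d _ (@ker_closed K p d S)). Qed.

Lemma mu_ge0 n A : 0 <= mu n A.
Proof. by have [m [-> _]] := @conv_pow_meas K d R nu n; exact: measure_ge0. Qed.

Lemma mu_le n (A B : set (EndE K d)) : measurable A -> measurable B -> A `<=` B ->
  mu n A <= mu n B.
Proof. by have [m [-> _]] := @conv_pow_meas K d R nu n; move=> mA mB AB; apply: le_measure => //; rewrite inE. Qed.

Lemma mu_le1 n A : measurable A -> mu n A <= 1.
Proof.
have [m [Em mT]] := @conv_pow_meas K d R nu n => mA.
by rewrite -mT Em; apply: le_measure => //; rewrite inE.
Qed.

Lemma subker p (S : 'M[K]_(p,d)) (h : 'M[K]_d) : (S <= kermx h)%MS = (S *m h == 0)%R.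
Proof. by apply/sub_kermxP/eqP. Qed.

Lemma Az_eq p q (S : 'M[K]_(p,d)) (T : 'M[K]_(q,d)) : (S == T)%MS -> Az S = Az T.
Proof.
move=> /andP [ST TS]; apply/seteqP; split => h; rewrite /Az /=; rewrite -!subker => H.
  exact: submx_trans TS H.
exact: submx_trans ST H.
Qed.

Lemma AzI (S T : 'M[K]_d) : Az S `&` Az T = Az (S + T)%MS.
Proof.
apply/seteqP; split => h; rewrite /Az /=.
  by move=> [HS HT]; rewrite -subker addsmx_sub !subker HS HT.
by rewrite -subker addsmx_sub !subker => /andP [].
Qed.

Definition Mset n := [set S : 'M[K]_d | <<S>>%MS = S /\ 0 < mu n (Az S) /\
  forall S' : 'M[K]_d, (S < S')%MS -> mu n (Az S') = 0].

Lemma M_null n S T : Mset n S -> Mset n T -> S != T -> mu n (Az S `&` Az T) = 0.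
Proof.
move=> [gS [pS mS]] [gT [pT mT]] ST.
rewrite AzI; apply: mS; rewrite ltmxE addsmxSl /=; apply/negP => sub.
have TS : (T <= S)%MS by move: sub; rewrite addsmx_sub => /andP [].
case/boolP: (S <= T)%MS => ST'.
  have : (S == T)%MS by rewrite ST' TS.
  by move/eqmxP/eq_genmx; rewrite gS gT => E; rewrite E eqxx in ST.
have : (T < S)%MS by rewrite ltmxE TS ST'.
by move/mT => z; rewrite z ltxx in pS.
Qed.


Lemma mu0 n : mu n set0 = 0.
Proof. by have [m [-> _]] := @conv_pow_meas K d R nu n; exact: measure0. Qed.

Lemma mu_U2 n (A B : set (EndE K d)) : measurable A -> measurable B ->
  mu n (A `|` B) <= mu n A + mu n B.
Proof. by have [m [-> _]] := @conv_pow_meas K d R nu n; exact: measureU2. Qed.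

Lemma mu_U n (A B : set (EndE K d)) : measurable A -> measurable B ->
  A `&` B = set0 -> mu n (A `|` B) = mu n A + mu n B.
Proof. by have [m [-> _]] := @conv_pow_meas K d R nu n; move=> *; exact: measureU. Qed.

Lemma mu_DI n (A B : set (EndE K d)) : measurable A -> measurable B ->
  mu n A = mu n (A `\` B) + mu n (A `&` B).
Proof. by have [m [-> _]] := @conv_pow_meas K d R nu n; exact: measureDI. Qed.

Lemma union_null n (A : set (EndE K d)) (s : seq 'M[K]_d) : measurable A ->
  (forall T, T \in s -> mu n (Az T `&` A) = 0) ->
  mu n ((\big[setU/set0]_(T <- s) Az T) `&` A) = 0.
Proof.
move=> mA; elim: s => [|T s IH] H; first by rewrite big_nil set0I mu0.
rewrite big_cons setIUl; apply/eqP; rewrite eq_le mu_ge0 andbT.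
have mU : measurable (\big[setU/set0]_(T <- s) Az T `&` A).
  by apply: measurableI => //; apply: bigsetU_measurable => i _; exact: Az_meas.
have mAT : measurable (Az T `&` A) by apply: measurableI => //; exact: Az_meas.
apply: le_trans (mu_U2 n _ _ mAT mU) _.
rewrite (H T (mem_head _ _)) IH ?adde0 // => T' T's.
by apply: H; rewrite in_cons T's orbT.
Qed.

Lemma union_add n (s : seq 'M[K]_d) : uniq s -> (forall S, S \in s -> Mset n S) ->
  mu n (\big[setU/set0]_(S <- s) Az S) = \sum_(S <- s) mu n (Az S).
Proof.
elim: s => [|S s IH] /=; first by move=> _ _; rewrite !big_nil mu0.
move=> /andP [Sns us] H.
rewrite !big_cons -IH //; last by move=> T Ts; apply: H; rewrite in_cons Ts orbT.
set U := \big[setU/set0]_(T <- s) Az T.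
have mU : measurable U by apply: bigsetU_measurable => i _; exact: Az_meas.
have nul : mu n (U `&` Az S) = 0.
  apply: union_null; first exact: Az_meas.
  move=> T Ts; rewrite setIC; apply: M_null.
  - by apply: H; exact: mem_head.
  - by apply: H; rewrite in_cons Ts orbT.
  - by apply/negP => /eqP ST; move: Sns; rewrite ST Ts.
have -> : Az S `|` U = Az S `|` (U `\` Az S).
  apply/seteqP; split => x; last by case=> [|[]]; [left|right].
  by case: (pselect (Az S x)) => [? _|nS [|Ux]]; [left|by []|right].
rewrite mu_U //; first last.
- by rewrite setDE setICA setICr setI0.
- by apply: measurableD => //; exact: Az_meas.
- exact: Az_meas.
by rewrite [in RHS](mu_DI n _ _ mU (Az_meas _ S)) nul adde0.
Qed.

Definition Mk n (k : nat) := [set S : 'M[K]_d | Mset n S /\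
  (((k.+1)%:R)^-1)%:E <= mu n (Az S)].

Lemma Mk_bound n k (s : seq 'M[K]_d) : uniq s -> (forall S, S \in s -> Mk n k S) ->
  (size s <= k.+1)%N.
Proof.
move=> us H.
have H1 : (((size s)%:R * ((k.+1)%:R)^-1)%R)%:E <= \sum_(S <- s) mu n (Az S).
  elim: s us H => [|S s IH] /=; first by rewrite big_nil mul0r.
  move=> /andP [_ us] H; rewrite big_cons -addn1 natrD mulrDl mul1r EFinD addeC.
  apply: leeD; first exact: (proj2 (H S (mem_head _ _))).
  by apply: IH => // T Ts; apply: H; rewrite in_cons Ts orbT.
have H2 : \sum_(S <- s) mu n (Az S) <= 1.
  rewrite -union_add //; last by move=> S /H [].
  by apply: mu_le1; apply: bigsetU_measurable => i _; exact: Az_meas.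
have := le_trans H1 H2; rewrite lee_fin ler_pdivrMr ?ltr0Sn // mul1r ler_nat.
by [].
Qed.

Lemma Mk_enum n k : exists s : seq 'M[K]_d, forall S, Mk n k S <-> S \in s.
Proof.
pose P m := `[< exists s : seq 'M[K]_d, [/\ uniq s, (forall S, S \in s -> Mk n k S) & size s = m] >].
have P0 : exists m, P m by exists 0%N; rewrite /P; apply/asboolP; exists [::].
have Pub : forall m, P m -> (m <= k.+1)%N.
  by move=> m; rewrite /P /= => /asboolP [s [us ss <-]]; exact: (Mk_bound _ _ _ us ss).
case: (ex_maxnP P0 Pub) => m; rewrite {1}/P /= => /asboolP [s [us ss sm]] mmax.
exists s => S; split; last exact: ss.
move=> MS; apply: contrapT => /negP Sns.
have : P (size s).+1.
  rewrite /P; apply/asboolP; exists (S :: s); split => //=; first by rewrite Sns.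
  move=> T; rewrite in_cons => /orP [/eqP-> //|]; exact: ss.
by move/mmax; rewrite sm ltnn.
Qed.

Lemma rank_meas r : measurable [set g : EndE K d | (\rank g < r)%N].
Proof. exact: (@EndE_closed_meas K d _ (@rank_lt_closed K d r)). Qed.

Lemma lower_rank_prop n :
  mu n [set g : EndE K d | (\rank g < lower_rank nu)%N] = 0.
Proof.
rewrite /lower_rank.
set A := [pred r : 'I_d.+2 | `[< forall n, mu n [set g : EndE K d | (\rank g < r)%N] = 0 >]].
have A0 : (0 < #|A|)%N.
  have H0 : forall m, mu m [set g : EndE K d | (\rank g < 0)%N] = 0.
    move=> m; have -> : [set g : EndE K d | (\rank g < 0)%N] = set0 by apply/seteqP; split.
    exact: mu0.
  apply/card_gt0P; exists ord0; rewrite /A inE /=.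
  exact: H0.
case: (@eq_bigmax_cond _ A (fun r => nat_of_ord r) A0) => i0 Ai0 E.
have -> : \max_(r < d.+2 | `[< forall n, mu n [set g : EndE K d | (\rank g < r)%N] = 0 >]) r = i0.
  exact: E.
move: Ai0; rewrite /A inE /= => H; exact: (H n).
Qed.

Lemma claimA n S : Mset n S -> (\rank S <= d - lower_rank nu)%N.
Proof.
move=> [_ [pS _]].
have [h [Sh rh]] : exists h : EndE K d, (S *m h == 0)%R /\ ~ (\rank h < lower_rank nu)%N.
  apply: contrapT => nh.
  have sub : Az S `<=` [set g : EndE K d | (\rank g < lower_rank nu)%N].
    by move=> h Sh; apply: contrapT => rh; apply: nh; exists h.
  have := mu_le n _ _ (Az_meas _ S) (rank_meas _) sub.
  rewrite lower_rank_prop => le0.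
  by have := lt_le_trans pS le0; rewrite ltxx.
have : (S <= kermx h)%MS by rewrite subker.
move/mxrankS; rewrite mxrank_ker.
move/negP: rh; rewrite -leqNgt => rh; lia.
Qed.

Lemma claimB n S (v : 'rV[K]_d) : Mset n S -> (v <= S)%MS -> lower_ker nu v.
Proof.
move=> [_ [pS _]] vS; exists n.
apply: lt_le_trans pS _; apply: mu_le; [exact: Az_meas|exact: (Az_meas _ v)|].
move=> h; rewrite /Az /= => /eqP Sh.
by case/submxP: vS => w ->; rewrite -mulmxA Sh mulmx0.
Qed.

Lemma zero_ker : lower_ker nu (0%R : 'rV[K]_d).
Proof.
exists 0%N => /=; rewrite diracE mem_set //= ?mul0mx //.
Qed.

Lemma claimC (v : 'rV[K]_d) : lower_ker nu v -> exists n S, Mset n S /\ (v <= S)%MS.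
Proof.
move=> [n pv].
have pv' : 0 < mu n (Az v) := pv.
pose Q k := `[< exists S : 'M[K]_d, [/\ (v <= S)%MS, 0 < mu n (Az S) & \rank S = k] >].
have ev : (<<v>> == v)%MS by apply/eqmxP; exact: genmxE.
have Q0 : exists k, Q k.
  exists (\rank <<v>>%MS); rewrite /Q /=; apply/asboolP; exists <<v>>%MS; split => //.
  - by rewrite genmxE.
  - by rewrite (Az_eq _ _ _ _ ev).
have Qub : forall k, Q k -> (k <= d)%N.
  by move=> k; rewrite /Q /= => /asboolP [S [_ _ <-]]; exact: rank_leq_row.
case: (ex_maxnP Q0 Qub) => k; rewrite {1}/Q /= => /asboolP [S0 [vS0 pS0 rS0]] kmax.
have eS : (<<S0>> == S0)%MS by apply/eqmxP; exact: genmxE.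
exists n, <<S0>>%MS; split; last by rewrite genmxE.
split; first exact: genmx_id.
split; first by rewrite (Az_eq _ _ _ _ eS).
move=> S' lt; apply/eqP; rewrite eq_le mu_ge0 andbT leNgt; apply/negP => pS'.
have : Q (\rank S').
  rewrite /Q /=; apply/asboolP; exists S'; split => //.
  by apply: submx_trans (ltmxW lt); rewrite genmxE.
move/kmax; rewrite -rS0 leqNgt.
by move: lt; rewrite ltmxErank => /andP [_]; rewrite genmxE => ->.
Qed.

Lemma thresh n S : Mset n S -> exists k, Mk n k S.
Proof.
move=> MS; have [_ [pS _]] := MS.
have le1 := mu_le1 n _ (Az_meas _ S).
move: pS le1; case E: (mu n (Az S)) => [x| |] //= px _.
rewrite lte_fin in px.
pose N := Num.Def.archi_bound (x^-1)%R.
exists N; split => //; rewrite E lee_fin.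
have hx : (x^-1 < N%:R)%R by apply: archi_boundP; rewrite invr_ge0 ltW.
rewrite -(invrK x) lef_pV2 ?posrE ?invr_gt0 ?ltr0Sn //.
apply: (le_trans (ltW hx)); rewrite ler_nat; exact: leqnSn.
Qed.

End Main.

End PD.
Import PD.


Theorem proposition3p5 (K : localFieldType) (R : realType) (d : nat)
    (hd : (2 <= d)%N) (nu : probability (EndE K d) R) :
  exists S : nat -> 'M[K]_d,
    (forall i, (\rank (S i) <= d - lower_rank nu)%N) /\
    lower_ker nu = \bigcup_i [set v : 'rV[K]_d | (v <= S i)%MS].
Proof.
have hX : forall n k, {s : seq 'M[K]_d | forall S, Mk K R d nu n k S <-> S \in s}.
  by move=> n k; apply: cid; exact: (Mk_enum K R d nu n k).
pose sq n k := proj1_sig (hX n k).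
pose Sf i := if (choice.unpickle i : option (nat * nat * nat)) is Some (n, k, j)
  then nth 0 (sq n k) j else 0.
have Sf_good : forall i, Sf i = 0 \/ exists n, Mset K R d nu n (Sf i).
  move=> i; rewrite /Sf; case: (choice.unpickle i : option (nat * nat * nat)) => [[[n k] j]|]; last by left.
  case: (ltnP j (size (sq n k))) => hj; last by left; rewrite nth_default.
  right; exists n.
  by have [] := proj2 (proj2_sig (hX n k) (nth 0 (sq n k) j)) (mem_nth 0 hj).
exists Sf; split.
  by move=> i; case: (Sf_good i) => [->|[n Mn]]; [rewrite mxrank0|exact: (claimA K R d nu n _ Mn)].
apply/seteqP; split => v.
  move=> /(claimC K R d nu) [n [S [MS vS]]].
  have [k Mk] := thresh K R d nu n S MS.
  have Sin : S \in sq n k := proj1 (proj2_sig (hX n k) S) Mk.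
  exists (choice.pickle (n, k, index S (sq n k))) => //=.
  by rewrite /Sf choice.pickleK nth_index.
move=> [i _] /= vS; case: (Sf_good i) => [E|[n Mn]]; last exact: (claimB K R d nu n _ v Mn vS).
by move: vS; rewrite E submx0 => /eqP ->; exact: (zero_ker K R d nu).
Qed.
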